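(* Let $c_1=2$, let $c_2\ge4$ be a real number, let $c_3\in(0,1)$, and let $c_4=8H$ where $H\ge2$. Define $g_1(m)=-c_3m+c_1\sqrt{m}\ln(c_2m)+c_4\ln(m)$. Then for all real $m\ge2$, $$g_1(m)\le\frac{132c_1c_4}{c_3}\left[\ln\!\left(\frac{10\sqrt{c_2c_4}}{c_3}\right)\right]^2.$$ *)

(* Defs.v *)
From Stdlib Require Import Reals.
Open Scope R_scope.

Definition g1 (c1 c2 c3 c4 m : R) : R :=
  - c3 * m + c1 * sqrt m * ln (c2 * m) + c4 * ln m.

(* Main.v *)
Require Import Defs.
From Stdlib Require Import Reals Lra Psatz.
Open Scope R_scope.

Lemma ln_le_sub1 x : 0 < x -> ln x <= x - 1.
Proof. intro hx. pose proof (exp_ineq1_le (ln x)). rewrite exp_ln in H; lra. Qed.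

Lemma ln_le_m x y : 0 < x -> x <= y -> ln x <= ln y.
Proof. intros hx [h|h]. left; now apply ln_increasing. subst; lra. Qed.

Lemma ln_sqrt' x : 0 < x -> ln (sqrt x) = ln x / 2.
Proof.
  intro hx. assert (hs: 0 < sqrt x) by (apply sqrt_lt_R0; lra).
  rewrite <- (sqrt_sqrt x) at 2 by lra. rewrite ln_mult by lra. field.
Qed.

Lemma ln_tan s e : 0 < s -> 0 < e -> ln s <= e * s - 1 + ln (/ e).
Proof.
  intros hs he. rewrite ln_Rinv by lra.
  pose proof (ln_le_sub1 (e * s)). rewrite ln_mult in H by lra. nra.
Qed.

Theorem lemma1 (c1 c2 c3 c4 H : R)
  (hc1 : c1 = 2) (hc2 : 4 <= c2) (hc3 : 0 < c3 < 1)
  (hH : 2 <= H) (hc4 : c4 = 8 * H) :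
  forall m : R, 2 <= m ->
    g1 c1 c2 c3 c4 m <=
      132 * c1 * c4 / c3 * (ln (10 * sqrt (c2 * c4) / c3)) ^ 2.
Proof.
  intros m hm. unfold g1. subst c1.
  assert (h4 : 16 <= c4) by lra.
  set (s := sqrt m).
  assert (hs2 : s * s = m) by (apply sqrt_sqrt; lra).
  assert (hs1 : 1 < s).
  { assert (0 <= s) by (apply sqrt_pos). nra. }
  assert (hlm : ln m = 2 * ln s).
  { rewrite <- hs2, ln_mult by lra. ring. }
  assert (hlcm : ln (c2 * m) = ln c2 + 2 * ln s).
  { rewrite ln_mult, hlm by lra. ring. }
  rewrite hlcm, hlm, <- hs2.
  set (L := ln (10 * sqrt (c2 * c4) / c3)).
  assert (hL : L = ln 10 + ln c2 / 2 + ln c4 / 2 + ln (/ c3)).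
  { unfold L. unfold Rdiv. rewrite sqrt_mult by lra.
    assert (0 < sqrt c2) by (apply sqrt_lt_R0; lra).
    assert (0 < sqrt c4) by (apply sqrt_lt_R0; lra).
    assert (0 < / c3) by (apply Rinv_0_lt_compat; lra).
    assert (0 < sqrt c2 * sqrt c4) by (apply Rmult_lt_0_compat; lra).
    rewrite ln_mult; [| |lra]. 2: apply Rmult_lt_0_compat; lra.
    rewrite ln_mult; [|lra|lra].
    rewrite ln_mult; [|lra|lra].
    rewrite !ln_sqrt' by lra. lra. }
  assert (hic : 0 <= ln (/ c3)).
  { rewrite <- ln_1. apply ln_le_m; try lra. rewrite <- Rinv_1.
    apply Rinv_le_contravar; lra. }
  assert (l2 : ln 2 > / 2) by (pose proof ln_lt_2; lra).
  assert (l4 : ln 4 = 2 * ln 2).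
  { replace 4 with (2*2) by ring. rewrite ln_mult by lra. ring. }
  assert (l16 : ln 16 = 4 * ln 2).
  { replace 16 with (4*4) by ring. rewrite ln_mult by lra. lra. }
  assert (lc2 : ln 4 <= ln c2) by (apply ln_le_m; lra).
  assert (lc4 : ln 16 <= ln c4) by (apply ln_le_m; lra).
  assert (l8 : ln 8 = 3 * ln 2).
  { replace 8 with (2*2*2) by ring. rewrite !ln_mult by lra. lra. }
  assert (l10 : ln 10 >= ln 8) by (apply Rle_ge, ln_le_m; lra).
  assert (l3 : ln 3 >= ln 2) by (apply Rle_ge, ln_le_m; lra).
  assert (l24 : ln 24 = 3 * ln 2 + ln 3).
  { replace 24 with (2*2*2*3) by ring. rewrite !ln_mult by lra. ring. }
  assert (l3' : ln 3 <= ln 4) by (apply ln_le_m; lra).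
  set (K := ln (/ (c3 / 24))).
  assert (hK : K = ln 24 + ln (/ c3)).
  { unfold K. rewrite Rinv_div. unfold Rdiv. rewrite ln_mult; try lra.
    apply Rinv_0_lt_compat; lra. }
  set (K' := ln (/ (c3 / c4))).
  assert (hK' : K' = ln c4 + ln (/ c3)).
  { unfold K'. rewrite Rinv_div. unfold Rdiv. rewrite ln_mult; try lra.
    apply Rinv_0_lt_compat; lra. }
  assert (t1 : ln s <= (c3/24) * s - 1 + K) by (apply ln_tan; lra).
  assert (t2 : ln s <= (c3/c4) * s - 1 + K').
  { apply ln_tan; try lra. apply Rdiv_lt_0_compat; lra. }
  assert (lns0 : 0 <= ln s) by (rewrite <- ln_1; apply ln_le_m; lra).
  set (a := ln c2) in *.
  set (b := ln s) in *.
  clearbody a b K K' L s.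
  assert (hLK : 0 <= K <= L) by (split; lra).
  assert (hLK2 : K' <= 2 * L) by lra.
  assert (hLa : 0 <= a <= 2 * L) by (split; lra).
  assert (hL1 : 1 <= L) by lra.
  assert (P1 : c3 * (- c3 * (s*s) / 3 + 2 * s * a) <= 3 * a * a).
  { pose proof (pow2_ge_0 (c3*s-3*a)). nra. }
  assert (P2a : 4 * s * b <= c3 * (s*s) / 6 + 4 * s * (K - 1)).
  { replace (c3 * (s*s) / 6) with (4 * s * (c3/24 * s)) by field. assert (0 <= s) by lra.
    assert (b - (c3/24*s) <= K - 1) by lra.
    assert (4*s*(b - (c3/24*s)) <= 4*s*(K-1)) by (apply Rmult_le_compat_l; lra). lra. }
  assert (P2 : c3 * (- c3 * (s*s) / 6 + 4 * s * K) <= 24 * K * K) by (pose proof (pow2_ge_0 (c3*s-12*K)); nra).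
  assert (P3a : 2 * c4 * b <= 2 * c3 * s - 2 * c4 + 2 * c4 * K').
  { replace (2 * c3 * s) with (2 * c4 * (c3 / c4 * s)) by (field; lra).
    assert (2*c4*(b - (c3/c4*s)) <= 2*c4*(K'-1)) by (apply Rmult_le_compat_l; lra). lra. }
  assert (P3 : - c3 * (s*s) / 3 + 2 * c3 * s <= 3 * c3) by (pose proof (pow2_ge_0 (s-3)); nra).
  assert (tot : - c3 * (s * s) + 2 * s * (a + 2 * b) + c4 * (2 * b)
     <= (3 * a * a + 24 * K * K) / c3 + 3 * c3 + 2 * c4 * K').
  { assert (E1 : - c3 * (s*s) / 3 + 2 * s * a <= 3 * a * a / c3).
    { apply (Rmult_le_reg_l c3); [lra|].
      replace (c3 * (3 * a * a / c3)) with (3 * a * a) by (field; lra). lra. }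
    assert (E2 : - c3 * (s*s) / 6 + 4 * s * K <= 24 * K * K / c3).
    { apply (Rmult_le_reg_l c3); [lra|].
      replace (c3 * (24 * K * K / c3)) with (24 * K * K) by (field; lra). lra. }
    unfold Rdiv in *. rewrite Rmult_plus_distr_r. lra. }
  eapply Rle_trans; [exact tot|].
  assert (hi : 1 <= / c3).
  { rewrite <- Rinv_1. apply Rinv_le_contravar; lra. }
  unfold Rdiv.
  set (X := / c3) in *. clearbody X.
  assert (Q1 : 3 * a * a + 24 * K * K <= 36 * (L*L)) by nra.
  assert (Q2 : (3 * a * a + 24 * K * K) * X <= 36 * (L*L) * X) by (apply Rmult_le_compat_r; lra).
  assert (Q3 : L <= L * L) by nra.
  assert (Q4 : L*L <= L*L*X) by nra.
  assert (Q5 : 2 * c4 * K' <= 4 * c4 * (L*L*X)) by nra.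
  assert (Q6 : 3 * c3 <= 3 * (L*L*X)) by nra.
  assert (Q7 : 0 <= L*L*X) by nra.
  replace (132 * 2 * c4 * X * L ^ 2) with (264 * c4 * (L*L*X)) by ring.
  assert (Q8 : 4 * (L*L*X) <= c4 * (L*L*X)) by (apply Rmult_le_compat_r; lra).
  lra.
Qed.
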